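(* Fix a finite alphabet $\{1,\ldots,S\}$ and a probability distribution $Q=(q_1,\ldots,q_S)$. For a nonnegative vector $R=(r_1,\ldots,r_S)$ and $\hat A\subseteq\{1,\ldots,S\}$ let $\ell(\hat A;R,Q)=\frac14\sum_i|r_i-q_i|-\frac12(R(\hat A)-Q(\hat A))$. Under the Poisson model, the counts $n\hat r_i\sim\mathsf{Poi}(nr_i)$, $1\le i\le S$, are mutually independent and a decision rule $\hat A$ is a function of these counts and $Q$. Let $\mathcal{D}_0(S,\epsilon)=\{(p_1,\ldots,p_S):p_i\ge0,\ |\sum_ip_i-1|<\epsilon\}$, define the Poissonized minimax regret $R_P(S,n,Q,\epsilon)=\inf_{\hat A}\sup_{R\in\mathcal{D}_0(S,\epsilon)}\mathbb{E}_R[\ell(\hat A;R,Q)]$ and, for a prior $\mu$ on nonnegative vectors in $\mathbb{R}^S$, the Bayes regret $R_B(S,n,Q,\mu)=\inf_{\hat A}\int\mathbb{E}_R[\ell(\hat A;R,Q)]\,\mu(dR)$, both under the Poisson model. If there exists a constant $C>1$ such that $\mu\{P:\sum_{i=1}^S p_i\le C\}=1$, then $$R_P(S,n,Q,\epsilon)\ge R_B(S,n,Q,\mu)-C\,\mu\big((\mathcal{D}_0(S,\epsilon))^c\big).$$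
   Context: $\mathsf{Poi}(\lambda)$ is the Poisson distribution with mean $\lambda$; $R(\hat A)=\sum_{i\in\hat A}r_i$. *)

(* Defs.v *)
From HB Require Import structures.
From mathcomp Require Import all_boot all_order all_algebra.
From mathcomp Require Import all_classical all_reals all_analysis.
Set Implicit Arguments. Unset Strict Implicit. Unset Printing Implicit Defensive.
Import Order.TTheory GRing.Theory Num.Theory numFieldNormedType.Exports.
Local Open Scope ring_scope.

Section Defs.
Variables (R : realType) (S : nat).

Definition pois (lam : R) (k : nat) : R := lam ^+ k / k`!%:R * expR (- lam).

Definition massof (r : 'I_S -> R) (A : {set 'I_S}) : R := \sum_(i in A) r i.

Definition loss (A : {set 'I_S}) (r q : 'I_S -> R) : R :=
  4^-1 * (\sum_i `|r i - q i|) - 2^-1 * (massof r A - massof q A).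

(* A (deterministic) decision rule: a function of the count vector
   (n r^_i)_i; Q is fixed, so dependence on Q is implicit. *)
Definition rule := ('I_S -> nat) -> {set 'I_S}.

Definition Eloss_trunc (n : nat) (A : rule) (r q : 'I_S -> R) (N : nat) : R :=
  \sum_(k : {ffun 'I_S -> 'I_N})
     (\prod_i pois (n%:R * r i) (k i)) * loss (A (fun i => nat_of_ord (k i))) r q.

(* E_R[ l(A;R,Q) ] under the Poisson model: counts n r^_i ~ Poi(n r_i),
   independent; the (absolutely convergent) sum over N^S is taken as the limit
   of the sums over the boxes {0..N-1}^S. *)
Definition Eloss (n : nat) (A : rule) (r q : 'I_S -> R) : R :=
  limn (Eloss_trunc n A r q).

Definition D0 (eps : R) : set ('I_S -> R) :=
  [set p | (forall i, 0 <= p i) /\ `|\sum_i p i - 1| < eps].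

Definition RP (n : nat) (q : 'I_S -> R) (eps : R) : \bar R :=
  ereal_inf [set v | exists A : rule,
    v = ereal_sup [set w | exists2 r, D0 eps r & w = (Eloss n A r q)%:E]].

(* Bayes regret R_B(S,n,Q,mu), where the prior mu is the law of the random
   nonnegative vector X defined on the probability space (T, P). *)
Definition RB d (T : measurableType d) (P : probability T R)
    (X : T -> 'I_S -> R) (n : nat) (q : 'I_S -> R) : \bar R :=
  ereal_inf [set v | exists A : rule,
    v = (\int[P]_t (Eloss n A (X t) q)%:E)%E].

End Defs.

(* Main.v *)
Require Import Defs.
From HB Require Import structures.
From mathcomp Require Import all_boot all_order all_algebra.
From mathcomp Require Import all_classical all_reals all_analysis.
From mathcomp Require Import lra.
Import Order.TTheory GRing.Theory Num.Theory numFieldNormedType.Exports.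
Local Open Scope ring_scope.
Local Open Scope classical_set_scope.

Section Aux.
Variables (R : realType) (S : nat).

Lemma pois_ge0 (l : R) k : 0 <= l -> 0 <= pois l k.
Proof.
move=> l0; rewrite /pois mulr_ge0 ?expR_ge0 // divr_ge0 // exprn_ge0 //.
Qed.

Lemma pois_sum_le1 (l : R) N : 0 <= l -> \sum_(k < N) pois l k <= 1.
Proof.
move=> l0.
have -> : \sum_(k < N) pois l k = (\sum_(k < N) l ^+ k / k`!%:R) * expR (- l).
  by rewrite mulr_suml; apply: eq_bigr.
rewrite expRN -[X in _ <= X](@divff _ (expR l)) ?gt_eqF ?expR_gt0 //.
rewrite ler_wpM2r // ?invr_ge0 ?expR_ge0 //.
have : (series (exp_coeff l) N <= expR l).
  apply: nondecreasing_cvgn_le; last exact: is_cvg_series_exp_coeff.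
  apply/nondecreasing_seqP => m; rewrite /series /= big_nat_recr //=.
  by rewrite lerDl /exp_coeff /= divr_ge0 // exprn_ge0.
by rewrite /series /= big_mkord.
Qed.

Lemma weights_le1 (n : nat) (r : 'I_S -> R) N : (forall i, 0 <= r i) ->
  \sum_(k : {ffun 'I_S -> 'I_N}) \prod_i pois (n%:R * r i) (k i) <= 1.
Proof.
move=> r0; rewrite -(bigA_distr_bigA (fun i (j : 'I_N) => pois (n%:R * r i) j)).
apply: prodr_ile1 => i _; apply/andP; split.
  by apply: sumr_ge0 => j _; apply: pois_ge0; rewrite mulr_ge0.
by apply: pois_sum_le1; rewrite mulr_ge0.
Qed.


Lemma Eloss_trunc_le n A (r q : 'I_S -> R) b N : (forall i, 0 <= r i) -> 0 <= b ->
  (forall B, loss B r q <= b) -> Eloss_trunc n A r q N <= b.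
Proof.
move=> r0 b0 lb; rewrite /Eloss_trunc.
apply: (le_trans (y := \sum_(k : {ffun 'I_S -> 'I_N}) (\prod_i pois (n%:R * r i) (k i)) * b)).
  apply: ler_sum => k _; apply: ler_wpM2l => //.
  by apply: prodr_ge0 => i _; apply: pois_ge0; rewrite mulr_ge0.
by rewrite -mulr_suml ler_piMl // weights_le1.
Qed.

Lemma Eloss_le n A (r q : 'I_S -> R) b : (forall i, 0 <= r i) -> 0 <= b ->
  (forall B, loss B r q <= b) -> Eloss n A r q <= b.
Proof.
move=> r0 b0 lb; rewrite /Eloss.
have [cv|dv] := pselect (cvgn (Eloss_trunc n A r q)).
  by apply: limr_le => //; near=> N; apply: Eloss_trunc_le.
by rewrite dvgP.
Unshelve. all: by end_near.
Qed.

Lemma Eloss_qq n A (q : 'I_S -> R) : Eloss n A q q = 0.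
Proof.
rewrite /Eloss (_ : Eloss_trunc n A q q = fun _ => 0) ?lim_cst //.
apply/funext => N; rewrite /Eloss_trunc big1 // => k _.
suff -> : loss (A (fun i => nat_of_ord (k i))) q q = 0 by rewrite mulr0.
rewrite /loss (subrr (massof q _)) mulr0 subr0.
by rewrite (eq_bigr (fun _ => 0)) ?big1 ?mulr0 // => i _; rewrite subrr normr0.
Qed.

Lemma loss_le B (r q : 'I_S -> R) : (forall i, 0 <= r i) -> (forall i, 0 <= q i) ->
  \sum_i q i = 1 -> loss B r q <= 4^-1 * (\sum_i r i + 3).
Proof.
move=> r0 q0 q1; rewrite /loss /massof.
have h1 : \sum_i `|r i - q i| <= \sum_i r i + 1.
  rewrite -q1 -big_split /=; apply: ler_sum => i _.
  by rewrite (le_trans (ler_normB _ _)) // !ger0_norm.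
have h2 : 0 <= \sum_(i in B) r i by apply: sumr_ge0.
have h3 : \sum_(i in B) q i <= 1.
  rewrite -q1 [X in _ <= X](bigID (fun i => i \in B)) /= lerDl.
  by apply: sumr_ge0.
lra.
Qed.

End Aux.

Lemma le_integral_any d (T : measurableType d) (R : realType)
  (mu : {measure set T -> \bar R}) (f g : T -> \bar R) :
  (forall x, (0 <= f x)%E) -> (forall x, (f x <= g x)%E) ->
  (\int[mu]_x f x <= \int[mu]_x g x)%E.
Proof.
move=> f0 fg.
have g0 : forall x, (0 <= g x)%E by move=> x; exact: le_trans (f0 x) (fg x).
rewrite !ge0_integralTE //; apply: ereal_sup_le => _ [h hf <-].
by exists h => // x; exact: le_trans (hf x) (fg x).
Qed.

Theorem lemma9 (R : realType) (S n : nat) (q : 'I_S -> R)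
  (eps : R) (C : R)
  (d : measure_display) (T : measurableType d) (P : probability T R)
  (X : T -> 'I_S -> R) :
  (forall i, 0 <= q i) -> \sum_i q i = 1 ->
  0 < eps ->
  (forall i, measurable_fun setT (fun t => X t i)) ->
  (forall t i, 0 <= X t i) ->
  1 < C ->
  P [set t | \sum_i X t i <= C] = 1%E ->
  (RP n q eps >= RB P X n q - C%:E * P [set t | ~ D0 eps (X t)])%E.
Proof.
move=> q0 q1 eps0 mX X0 C1 PG.
have C0 : 0 <= C by apply: ltW; apply: lt_trans C1.
pose s t := \sum_i X t i.
have ms : measurable_fun setT s by apply: measurable_sum.
pose Dc := [set t | ~ D0 eps (X t)].
have DcE : Dc = setT `&` [set t | cst eps t <= `|s t - 1|].
  apply/seteqP; split => t /=.
    by rewrite /Dc /D0 /= => H; split => //; rewrite leNgt; apply/negP => H'; apply: H; split.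
  by move=> [_ H] [_ H']; move: H; rewrite leNgt H'.
have mDc : measurable Dc.
  rewrite DcE; apply: measurable_fun_le => //.
  apply: (measurableT_comp (@measurable_realfun.normr_measurable R setT)).
  exact: (measurable_realfun.measurable_funB ms (measurable_cst _)).
pose G := [set t | s t <= C].
have mG : measurable G.
  rewrite (_ : G = setT `&` [set t | s t <= cst C t]); last by rewrite setTI.
  by apply: measurable_fun_le.
have PGc : P (~` G) = 0%E by rewrite probability_setC // PG subee.
have cfin : (C%:E * P Dc)%E \is a fin_num.
  by rewrite fin_numM // fin_num_measure.
apply: le_ereal_inf_tmp => _ [A ->].
set M := ereal_sup _.
have M0 : (0 <= M)%E.
  apply: ereal_sup_ubound; exists q; last by rewrite Eloss_qq.
  by split => //; rewrite q1 subrr normr0.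
have : (exists2 m : R, M = m%:E & 0 <= m) \/ M = +oo%E.
  by case: M M0 => [m| |] //; [left; exists m | right].
case=> [[m Mm m0]|Mp]; last by rewrite Mp leey.
rewrite Mm.
pose F t := (Eloss n A (X t) q)%:E.
pose b t := 4^-1 * (s t + 3).
have mb : measurable_fun setT b.
  exact: (measurable_realfun.measurable_funM (measurable_cst _)
           (measurable_realfun.measurable_funD ms (measurable_cst _))).
have key : (\int[P]_t F t <= m%:E + C%:E * P Dc)%E.
  apply: (le_trans (y := (\int[P]_t (F^\+ t))%E)).
    rewrite [leLHS]integralE -[leRHS]sube0; apply: leeB => //.
    by apply: integral_ge0 => t _; exact: funeneg_ge0.
  apply: (le_trans (y := (\int[P]_t (m%:E + (b t * \1_Dc t)%:E))%E)).
    apply: le_integral_any => t; first exact: funepos_ge0.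
    have [Dct|nDct] := pselect (Dc t).
      rewrite indicE mem_set // mulr1 funeposE ge_max; apply/andP; split.
        apply: (le_trans (y := (b t)%:E)); last by rewrite leeDr // lee_fin.
        rewrite lee_fin; apply: Eloss_le => //.
          by rewrite mulr_ge0 // addr_ge0 // sumr_ge0.
        by move=> B; apply: loss_le.
      by rewrite adde_ge0 // lee_fin mulr_ge0 // ?indicE ?mulr_ge0 // addr_ge0 // sumr_ge0.
    rewrite indicE memNset // mulr0 adde0 funeposE ge_max; apply/andP; split => //.
    rewrite -Mm; apply: ereal_sup_ubound; exists (X t) => //.
    by move: nDct; rewrite /Dc /= => /contrapT.
  apply: (le_trans (y := (\int[P]_t (m%:E + (C * \1_Dc t)%:E))%E)).
    apply: ae_ge0_le_integral => //.
    - by move=> t _; rewrite adde_ge0 // lee_fin mulr_ge0 // ?indicE ?mulr_ge0 // addr_ge0 // sumr_ge0.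
    - apply: emeasurable_funD => //; apply/measurable_realfun.measurable_EFinP.
      by apply: measurable_realfun.measurable_funM => //; exact: measurable_realfun.measurable_indic.
    - by move=> t _; apply: adde_ge0; rewrite lee_fin // mulr_ge0 // indicE.
    - apply: emeasurable_funD => //; apply/measurable_realfun.measurable_EFinP.
      by apply: measurable_realfun.measurable_funM => //; exact: measurable_realfun.measurable_indic.
    - exists (~` G); split; [exact: measurableC | exact: PGc |].
      move=> t /= H Gt; apply: H => _.
      rewrite leeD2l // lee_fin ler_wpM2r // ?indicE //.
      by rewrite /b; move: Gt; rewrite /G /=; lra.
  rewrite ge0_integralD //.
  - rewrite integral_cst // [X in (m%:E * X)%E](_ : _ = 1%E) ?mule1; last exact: probability_setT.
    rewrite leeD2l //.
    under eq_integral do rewrite EFinM.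
    rewrite ge0_integralZl_EFin //.
    - rewrite integral_indic // setIT; exact: le_refl.
    - by apply/measurable_realfun.measurable_EFinP; exact: measurable_realfun.measurable_indic.
  - by move=> t _; rewrite lee_fin mulr_ge0 // indicE.
  - apply/measurable_realfun.measurable_EFinP.
    by apply: measurable_realfun.measurable_funM => //; exact: measurable_realfun.measurable_indic.
apply: (le_trans (y := (\int[P]_t F t - C%:E * P Dc)%E)).
  apply: leeB => //; apply: ereal_inf_lbound; exists A => //.
by rewrite leeBlDr.
Qed.
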